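(* For $k\ge4$ and $d\in[d_{\mathrm{lbd}}(k),d_{\mathrm{ubd}}(k)]$, $|\Psi_d'(x)|<1$ for all $x\in[\frac12-\frac1{2^k},\frac12]$.
   Context: $\hat\Psi(x)=\frac{1-2x^{k-1}}{1-x^{k-1}}$, $\dot\Psi(v)=\frac{1-v^{d-1}}{2-v^{d-1}}$, $\Psi_d=\dot\Psi\circ\hat\Psi$ ($d$ real). $d_{\mathrm{lbd}}(4)=16.7$, $d_{\mathrm{lbd}}(k)=(2^{k-1}-2)k\log2$ for $k\ge5$; $d_{\mathrm{ubd}}(k)=2^{k-1}k\log2$. *)

(* Defs.v *)
From Stdlib Require Import Reals.
Open Scope R_scope.

Definition Psi_hat (k : nat) (x : R) : R :=
  (1 - 2 * x ^ (k - 1)) / (1 - x ^ (k - 1)).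

(* \dot\Psi(v) = (1 - v^{d-1}) / (2 - v^{d-1}), d real: real power v^{d-1}
   (meaningful for v > 0, which is the case on the relevant range). *)
Definition Psi_dot (d : R) (v : R) : R :=
  (1 - Rpower v (d - 1)) / (2 - Rpower v (d - 1)).

Definition Psi (k : nat) (d : R) (x : R) : R := Psi_dot d (Psi_hat k x).

Definition d_lbd (k : nat) : R :=
  if (k =? 4)%nat then 167 / 10
  else (2 ^ (k - 1) - 2) * INR k * ln 2.

Definition d_ubd (k : nat) : R := 2 ^ (k - 1) * INR k * ln 2.

(* Main.v *)
Require Import Defs.
From Stdlib Require Import Reals Lra Psatz Lia.
From Coquelicot Require Import Coquelicot.
Open Scope R_scope.

Lemma t4 z : 0 <= z -> 1 + z + z^2/2 + z^3/6 + z^4/24 <= exp z.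
Proof. intros. pose proof (exp_ge_taylor z 4 H). simpl in H0. lra. Qed.

Lemma exp_mul_n (n : nat) z : exp (INR n * z) = exp z ^ n.
Proof.
  induction n as [|n IH].
  - simpl. rewrite Rmult_0_l, exp_0. reflexivity.
  - rewrite S_INR. replace ((INR n + 1) * z) with (INR n * z + z) by ring.
    rewrite exp_plus, IH. simpl. ring.
Qed.

Lemma ln2_ge : 69/100 <= ln 2.
Proof.
  assert (H1 : exp (69/12800) <= 12800/12731).
  { pose proof (exp_ineq1_le (- (69/12800))).
    assert (exp (69/12800) * exp (-(69/12800)) = 1).
    { rewrite <- exp_plus. replace (69/12800 + - (69/12800)) with 0 by ring. apply exp_0. }
    pose proof (exp_pos (69/12800)). nra. }
  assert (H2 : exp (69/100) <= 2).
  { replace (69/100) with (INR 128 * (69/12800)) by (simpl; field).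
    rewrite exp_mul_n.
    apply Rle_trans with ((12800/12731)^128).
    - apply pow_incr. split; [left; apply exp_pos| exact H1].
    - lra. }
  rewrite <- (ln_exp (69/100)). apply ln_le; [apply exp_pos | exact H2].
Qed.

Lemma div_le a b c e : 0 < b -> 0 < e -> a*e <= c*b -> a/b <= c/e.
Proof.
  intros. replace (a/b) with ((a*e)/(b*e)) by (field; lra).
  replace (c/e) with ((c*b)/(b*e)) by (field; lra).
  unfold Rdiv. apply Rmult_le_compat_r; [left; apply Rinv_0_lt_compat; nra | exact H1].
Qed.

Lemma key (s s0 w P Mx M : R) :
  1 <= s0 <= s -> 0 < w <= exp (-s) -> 1 < P <= exp s0 -> 0 <= Mx <= M ->
  s0 * M <= 4*(P-1) ->
  s * (w/(2-w)^2) * Mx < 1.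
Proof.
  intros [Hs0 Hs] [Hw0 Hw] [HP1 HP] [HM0 HM] Hc.
  set (Q := P * (1 + (s - s0))).
  assert (HQ : Q <= exp s).
  { replace (exp s) with (exp (s0 + (s - s0))) by (f_equal; ring). rewrite exp_plus.
    unfold Q. pose proof (exp_ineq1_le (s - s0)).
    apply Rmult_le_compat; lra. }
  assert (HQP : P <= Q) by (unfold Q; nra).
  set (u := / Q).
  assert (HQ0 : 0 < Q) by lra.
  assert (Hu0 : 0 < u) by (apply Rinv_0_lt_compat; lra).
  assert (HuQ : u * Q = 1) by (unfold u; field; lra).
  assert (HE : exp (-s) <= u).
  { rewrite exp_Ropp. unfold u. apply Rinv_le_contravar; lra. }
  assert (Hw1 : w <= u) by lra.
  assert (Hu1 : u <= 1) by nra.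
  assert (A1 : w/(2-w)^2 <= u/(2-u)^2).
  { apply div_le; try nra. 
    assert (u*(2-w)^2 - w*(2-u)^2 = (u-w)*(4-u*w)) by ring.
    assert (0 <= (u-w)*(4-u*w)) by (apply Rmult_le_pos; nra). lra. }
  assert (A2 : s * u * P <= s0).
  { assert (s <= s0 * (1 + (s - s0))) by nra.
    assert (s * u * P * (1 + (s - s0)) <= s0 * (1 + (s - s0))).
    { replace (s * u * P * (1 + (s - s0))) with (s * (u * Q)) by (unfold Q; ring).
      rewrite HuQ. lra. }
    nra. }
  assert (HuP : u * P <= 1) by nra.
  set (B := s0 * P / (2*P-1)^2).
  assert (A3 : s * (u/(2-u)^2) <= B).
  { unfold B. replace (s * (u/(2-u)^2)) with ((s*u)/(2-u)^2) by (field; lra).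
    apply div_le; try nra.
    assert (HsuP : s * u <= s0 / P).
    { apply Rmult_le_reg_r with P; [lra|]. field_simplify; lra. }
    assert (Hsu : s*u*P*P <= s0 * P) by nra.
    assert (H2u : (2*P - 1)^2 <= P*P*(2-u)^2).
    { assert (2*P - 1 <= P*(2-u)) by nra.
      assert (0 <= 2*P - 1) by lra. nra. }
    assert (0 <= s * u) by nra.
    nra. }
  assert (A4 : s * (w/(2-w)^2) <= B).
  { apply Rle_trans with (s * (u/(2-u)^2)); [|exact A3].
    apply Rmult_le_compat_l; lra. }
  assert (HB0 : 0 <= B).
  { unfold B. apply Rmult_le_pos; [nra|]. left; apply Rinv_0_lt_compat; nra. }
  assert (HB : B * (4*(P-1)) < s0).
  { unfold B. 
    replace (s0 * P / (2 * P - 1) ^ 2 * (4 * (P - 1))) with (s0 * (4*P*(P-1) / (2 * P - 1) ^ 2)) by (field; nra).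
    assert (4*P*(P-1) / (2 * P - 1) ^ 2 < 1).
    { apply Rmult_lt_reg_r with ((2*P-1)^2); [nra|].
      field_simplify; nra. }
    nra. }
  assert (s * (w/(2-w)^2) * Mx <= B * M).
  { apply Rmult_le_compat; try lra. apply Rmult_le_pos; [lra|].
    apply Rmult_le_pos; [lra| left; apply Rinv_0_lt_compat; nra]. }
  assert (B * M < 1).
  { destruct (Rle_lt_or_eq_dec _ _ HM0) as [HMp | HMz].
    - assert (0 < M) by lra.
      assert (B * M * (4*(P-1)) < s0 * M) by nra.
      nra.
    - subst Mx. nra. }
  lra.
Qed.
Lemma deriv_Psi (k : nat) (d x : R) :
  1 <= d -> 0 < x -> 0 < x ^ (k-1) < 1/2 ->
  derivable_pt_lim (Psi k d) x
   ((d-1) * exp ((d-1) * ln ((1 - 2*x ^ (k-1))/(1-x ^ (k-1)))) / ((1 - 2*x ^ (k-1))/(1-x ^ (k-1))) / (2-exp ((d-1) * ln ((1 - 2*x ^ (k-1))/(1-x ^ (k-1)))))^2 * (INR (k-1) * x^(k-1-1)) / (1-x ^ (k-1))^2).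
Proof.
  intros Hd Hx [Hy1 Hy2].
  apply is_derive_Reals.
  unfold Psi, Psi_dot, Psi_hat, Rpower.
  assert (Hv : 0 < (1 - 2*x ^ (k-1))/(1-x ^ (k-1))) by (apply Rdiv_lt_0_compat; lra).
  assert (Hv1 : (1 - 2*x ^ (k-1))/(1-x ^ (k-1)) <= 1).
  { apply Rmult_le_reg_r with (1 - x^(k-1)); [lra|].
    unfold Rdiv; rewrite Rmult_assoc, Rinv_l by lra; lra. }
  assert (Hw : exp ((d-1) * ln ((1 - 2*x ^ (k-1))/(1-x ^ (k-1)))) <= 1).
  { assert (HL : ln ((1 - 2*x ^ (k-1))/(1-x ^ (k-1))) <= 0).
    { destruct (Rle_lt_or_eq_dec _ _ Hv1) as [h|h].
      - rewrite <- ln_1. left. apply ln_increasing; lra.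
      - rewrite h, ln_1; lra. }
    assert (HA : (d-1) * ln ((1 - 2*x ^ (k-1))/(1-x ^ (k-1))) <= 0) by nra.
    destruct (Rle_lt_or_eq_dec _ _ HA) as [h'|h'].
    + assert (HH := exp_increasing _ _ h'). rewrite exp_0 in HH. lra.
    + rewrite h', exp_0; lra. }
  auto_derive.
  - unfold Rminus, Rdiv in *. repeat split; try lra.
  - replace (Init.Nat.pred (k-1)) with (k-1-1)%nat by lia.
    unfold Rminus, Rdiv in *.
    set (E := exp _).
    field. repeat split; try lra. unfold E. lra.
Qed.

Lemma exp_le_mono a b : a <= b -> exp a <= exp b.
Proof.
  intros H. destruct (Rle_lt_or_eq_dec _ _ H) as [h|h].
  - left; apply exp_increasing; exact h.
  - rewrite h; lra.
Qed.

Lemma finish (k : nat) (d x s0 P M : R) :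
  1 <= d -> 0 < x -> 0 < x^(k-1) < 1/2 -> (1 <= k-1)%nat ->
  1 <= s0 <= (d-1)*(x^(k-1)/(1-x^(k-1))) -> 1 < P <= exp s0 ->
  INR (k-1)/(x*(1-2*x^(k-1))) <= M -> s0*M <= 4*(P-1) ->
  exists l, derivable_pt_lim (Psi k d) x l /\ Rabs l < 1.
Proof.
  intros Hd Hx [Hy0 Hy1] Hm Hs HP HM Hc.
  eexists; split; [apply deriv_Psi; [lra|lra|split; lra]|].
  set (m := (k-1)%nat) in *.
  set (y := x^m) in *.
  set (z := x^(m-1)).
  assert (Hyx : y = x * z).
  { unfold y, z. rewrite tech_pow_Rmult. f_equal. lia. }
  set (v := (1 - 2*y)/(1-y)).
  set (w := exp ((d-1) * ln v)).
  assert (Hv : 0 < v) by (apply Rdiv_lt_0_compat; lra).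
  assert (Hw0 : 0 < w) by apply exp_pos.
  assert (Hlnv : ln v <= v - 1).
  { pose proof (exp_ineq1_le (ln v)). rewrite exp_ln in H; lra. }
  assert (Hv1 : v - 1 = - (y/(1-y))) by (unfold v; field; lra).
  assert (Hws : w <= exp (- ((d-1)*(y/(1-y))))).
  { apply exp_le_mono. rewrite Hv1 in Hlnv. nra. }
  assert (Hw1 : w <= 1).
  { apply Rle_trans with (1 := Hws). apply Rle_trans with (exp 0); [|rewrite exp_0; lra].
    apply exp_le_mono.
    assert (0 <= y/(1-y)) by (apply Rmult_le_pos; [lra| left; apply Rinv_0_lt_compat; lra]).
    nra. }
  assert (Hm0 : 0 <= INR m) by apply pos_INR.
  assert (HMx0 : 0 <= INR m/(x*(1-2*y))).
  { apply Rmult_le_pos; [lra| left; apply Rinv_0_lt_compat; nra]. }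
  assert (Heq : (d - 1) * w / v / (2 - w) ^ 2 * (INR m * z) / (1 - y) ^ 2
      = (d-1)*(y/(1-y)) * (w/(2-w)^2) * (INR m/(x*(1-2*y)))).
  { unfold v. rewrite Hyx. field. repeat split; try lra; try nra. }
  rewrite Heq.
  assert (Hlt : (d-1)*(y/(1-y)) * (w/(2-w)^2) * (INR m/(x*(1-2*y))) < 1).
  { apply (key _ s0 _ P _ M); try lra. }
  assert (H0 : 0 <= (d-1)*(y/(1-y)) * (w/(2-w)^2) * (INR m/(x*(1-2*y)))).
  { apply Rmult_le_pos; [|exact HMx0].
    apply Rmult_le_pos; [lra|].
    apply Rmult_le_pos; [lra| left; apply Rinv_0_lt_compat; nra]. }
  apply Rabs_def1; lra.
Qed.

Lemma bernoulli (a : R) (m : nat) : 0 <= a <= 1 -> 1 - INR m * a <= (1 - a)^m.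
Proof.
  intros Ha. induction m as [|m IH].
  - simpl; lra.
  - rewrite S_INR. simpl.
    assert ((1-a) * (1 - INR m * a) <= (1-a) * (1-a)^m) by (apply Rmult_le_compat_l; lra).
    assert (0 <= INR m) by apply pos_INR. nra.
Qed.

Lemma pow2_ge (m : nat) : (4 <= m)%nat -> 4 * INR m <= 2^m /\ 16 <= 2^m.
Proof.
  intros Hm. induction Hm as [|m Hm IH].
  - simpl; lra.
  - rewrite S_INR. simpl. lra.
Qed.

Theorem lemma3p3 (k : nat) (d : R) :
  (4 <= k)%nat ->
  d_lbd k <= d <= d_ubd k ->
  forall x : R, 1 / 2 - 1 / 2 ^ k <= x <= 1 / 2 ->
  exists l : R, derivable_pt_lim (Psi k d) x l /\ Rabs l < 1.
Proof.
  intros Hk [Hd _] x Hx.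
  assert (H2k : 2^k = 2 * 2^(k-1)).
  { rewrite tech_pow_Rmult. f_equal. lia. }
  rewrite H2k in Hx.
  assert (HN8 : 8 <= 2^(k-1)).
  { replace 8 with (2^3) by (simpl; ring). apply Rle_pow; [lra|lia]. }
  assert (Hxl : 7/16 <= x).
  { assert (1/(2*2^(k-1)) <= 1/16).
    { apply div_le; lra. }
    lra. }
  assert (HyN : x^(k-1) <= / 2^(k-1)).
  { rewrite <- pow_inv. apply pow_incr. lra. }
  assert (Hy0 : 0 < x^(k-1)) by (apply pow_lt; lra).
  assert (HiN : / 2^(k-1) <= 1/8).
  { replace (1/8) with (/8) by field. apply Rinv_le_contravar; lra. }
  assert (Hm1 : (1 <= k-1)%nat) by lia.
  destruct (Nat.eq_dec k 4) as [Hk4 | Hk4].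
  -
    subst k. unfold d_lbd in Hd. simpl in Hd.
    change (4-1)%nat with 3%nat in *.
    assert (Hy3 : (7/16)^3 <= x^3) by (apply pow_incr; lra).
    set (y := x^3) in *.
    assert (Hs : 143/100 <= (d-1)*(y/(1-y))).
    { assert (Ht : 343/3753 <= y/(1-y)).
      { apply div_le; simpl in Hy3; lra. }
      nra. }
    apply (finish 4 d x (143/100) (1 + 143/100 + (143/100)^2/2 + (143/100)^3/6 + (143/100)^4/24)
                  (3 * 65536 / 23870)); try lra.
    all: change (4-1)%nat with 3%nat.
    all: change (x^3) with y.
    + split; lra.
    + lia.
    + split; lra.
    + split; [simpl; lra | apply t4; lra].
    + simpl INR.
      assert (Hg : 23870/65536 <= x*(1-2*y)).
      { unfold y. simpl.
        assert (0 <= (x - 7/16) * (1 - 2*(x*x*x + x*x*(7/16) + x*(7/16)*(7/16) + (7/16)^3))).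
        { apply Rmult_le_pos; [lra|]. nra. }
        nra. }
      replace (1+1+1) with 3 by ring.
      apply div_le; lra.
  -
    assert (Hkb : (k =? 4)%nat = false) by (apply Nat.eqb_neq; exact Hk4).
    unfold d_lbd in Hd. rewrite Hkb in Hd.
    assert (Hm4 : (4 <= k-1)%nat) by lia.
    destruct (pow2_ge (k-1) Hm4) as [HN4m HN16].
    pose proof ln2_ge as Hln2.
    set (m := (k-1)%nat) in *.
    set (N := 2^m) in *.
    assert (HK : INR k = INR m + 1).
    { unfold m. rewrite <- S_INR. f_equal. lia. }
    assert (HmR : 4 <= INR m).
    { replace 4 with (INR 4) by (simpl; ring). apply le_INR. exact Hm4. }
    set (a := / N).
    assert (Ha0 : 0 < a) by (apply Rinv_0_lt_compat; lra).
    assert (HaN : a * N = 1) by (unfold a; field; lra).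
    assert (Ha16 : a <= 1/16).
    { unfold a. replace (1/16) with (/16) by field. apply Rinv_le_contravar; lra. }
    assert (Hma : INR m * a <= 1/4).
    { assert (INR m * a * N <= 1/4 * N) by (rewrite Rmult_assoc, HaN; lra). nra. }
    set (y := x^m) in *.
    assert (Hx0 : 1/2 - 1/(2*N) = (1 - a)/2) by (unfold a; field; lra).
    assert (Hyl : a * (1 - INR m * a) <= y).
    { apply Rle_trans with (((1-a)/2)^m).
      - rewrite Rmult_comm. unfold Rdiv. rewrite Rpow_mult_distr, pow_inv.
        fold N. fold a. pose proof (bernoulli a m ltac:(lra)).
        assert (0 <= (1-a)^m) by (apply pow_le; lra). nra.
      - apply pow_incr. lra. }
    set (K := INR k) in *.
    set (s0 := 21/32 * (69/100) * K - 1/16).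
    assert (Hs0 : 1 <= s0) by (unfold s0; lra).
    assert (Hs : s0 <= (d-1)*(y/(1-y))).
    { assert (Hty : y <= y/(1-y)).
      { assert (Hi : 1 <= /(1-y)).
        { apply Rmult_le_reg_r with (1-y); [lra|]. rewrite Rinv_l by lra. lra. }
        unfold Rdiv. nra. }
      assert (Hd1 : (N-2)*K*(69/100) - 1 <= d - 1).
      { assert (0 <= (N-2)*K) by nra. nra. }
      assert (Hd0 : 0 <= (N-2)*K*(69/100) - 1) by nra.
      assert (((N-2)*K*(69/100) - 1) * (a * (1 - INR m * a)) <= (d-1)*y).
      { apply Rmult_le_compat; try lra. nra. }
      assert (E : ((N-2)*K*(69/100) - 1) * (a * (1 - INR m * a))
                  = (K*(69/100)*(1-2*a) - a) * (1 - INR m * a)).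
      { replace (N*K*(69/100)*a) with (K*(69/100)*(a*N)) by ring.
        transitivity ((N * a)*K*(69/100)*(1 - INR m * a) - 2*a*K*(69/100)*(1 - INR m * a) - a*(1 - INR m * a)); [ring|].
        rewrite (Rmult_comm N a), HaN. ring. }
      assert (s0 <= (K*(69/100)*(1-2*a) - a) * (1 - INR m * a)).
      { unfold s0.
        assert (21/32 <= (1-2*a)*(1 - INR m * a)) by nra.
        assert (0 <= K) by lra. nra. }
      assert (0 <= d - 1) by lra.
      assert ((d-1)*y <= (d-1)*(y/(1-y))) by (apply Rmult_le_compat_l; lra).
      lra. }
    apply (finish k d x s0 (1 + s0 + s0^2/2 + s0^3/6 + s0^4/24) (INR m * (256/105))).
    all: change (k-1)%nat with m.
    all: change (x^m) with y.
    + assert (Hd1 : 1 <= (N-2)*K*(69/100)) by nra.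
      assert (0 <= (N-2)*K) by nra.
      assert (ln 2 * ((N-2)*K) >= 69/100 * ((N-2)*K)) by nra.
      lra.
    + lra.
    + split; lra.
    + exact Hm1.
    + split; lra.
    + split; [|apply t4; lra]. nra.
    + assert (Hg : 105/256 <= x*(1-2*y)).
      { assert (H1 : 15/32 <= x) by lra.
        assert (Hya : y <= a) by (unfold a; lra).
        assert (H2 : 7/8 <= 1-2*y) by lra.
        assert ((15/32)*(7/8) <= x*(1-2*y)) by (apply Rmult_le_compat; lra).
        lra. }
      replace (INR m * (256/105)) with (INR m / (105/256)) by field.
      apply div_le; try lra.
      assert (0 <= INR m) by lra. nra.
    + unfold s0. rewrite HK in *. nra.
Qed.
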